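(* Let $k \ge 2$ be an integer. If $G$ is a twin-free graph with $n$ vertices and $i_{\max}(G) = k$, then $n \le 2^{k-1}+k-1$. Furthermore, equality holds only if the graph $G$ is formed by taking a clique $K_{k-1}$ and adding, for every vertex subset $S$ of this clique, a vertex whose neighbourhood is precisely $S$.
   Context: $i_{\max}(G)$ denotes the number of maximal independent sets of $G$. A graph is twin-free if no two vertices have the same open neighbourhood. *)

(* Defs.v *)
From mathcomp Require Import all_boot.
Set Implicit Arguments. Unset Strict Implicit. Unset Printing Implicit Defensive.

Definition simple_graph (T : finType) (e : rel T) : Prop :=
  symmetric e /\ irreflexive e.

Definition nbhd (T : finType) (e : rel T) (x : T) : {set T} := [set y | e x y].

Definition twin_free (T : finType) (e : rel T) : Prop :=
  forall x y : T, nbhd e x = nbhd e y -> x = y.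

Definition independent (T : finType) (e : rel T) (A : {set T}) : bool :=
  [forall x in A, forall y in A, ~~ e x y].

Definition imax (T : finType) (e : rel T) : nat :=
  #|[set A : {set T} | maxset (independent e) A]|.

(* The extremal graph: a clique K_m on vertices inl i, plus for every subset
   S of the clique a vertex inr S whose neighbourhood is exactly S. *)
Definition ext_vertex (m : nat) : finType := ('I_m + {set 'I_m})%type.

Definition ext_rel (m : nat) : rel (ext_vertex m) :=
  fun u v =>
    match u, v with
    | inl i, inl j => i != j
    | inl i, inr X => i \in X
    | inr X, inl j => j \in X
    | inr _, inr _ => false
    end.

Definition graph_iso (T U : finType) (e : rel T) (e' : rel U) : Prop :=
  exists f : T -> U, bijective f /\ forall x y, e' (f x) (f y) = e x y.

(* Main.v *)
Require Import Defs.
From mathcomp Require Import all_boot.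
From mathcomp Require Import zify.
Set Implicit Arguments. Unset Strict Implicit. Unset Printing Implicit Defensive.

Definition helly (X : finType) (F : {set {set X}}) :=
  forall S : {set {set X}}, S \subset F -> S != set0 ->
  {in S &, forall C D, C :&: D != set0} -> exists y, forall C, C \in S -> y \in C.

Definition ccl (X : finType) (W : {set X}) (Q : {set {set X}}) :=
  forall A, A \in Q -> [/\ A \subset W, A != set0 & W :\: A \in Q].

Definition maj (p q r : bool) := [|| p && q, q && r | p && r].

Lemma helly_sub (X : finType) (F G : {set {set X}}) :
  F \subset G -> helly G -> helly F.
Proof. move=> FG hG S SF; apply: hG; exact: subset_trans FG. Qed.

Lemma maj_meet c1 c2 c3 d1 d2 d3 : maj c1 c2 c3 -> maj d1 d2 d3 ->
  [|| c1 && d1, c2 && d2 | c3 && d3].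
Proof. by case: c1; case: c2; case: c3; case: d1; case: d2; case: d3. Qed.

Lemma inWD (X : finType) (W C : {set X}) y : y \in W -> (y \in W :\: C) = ~~ (y \in C).
Proof. by move=> yW; rewrite inE yW andbT. Qed.

Lemma median (X : finType) (W : {set X}) (Q : {set {set X}}) a b z :
  ccl W Q -> helly Q -> Q != set0 -> a \in W -> b \in W -> z \in W ->
  exists2 w, w \in W & forall C, C \in Q -> (w \in C) = maj (a \in C) (b \in C) (z \in C).
Proof.
move=> cQ hQ /set0Pn [C0 C0Q] aW bW zW.
pose S := [set C in Q | maj (a \in C) (b \in C) (z \in C)].
have SQ : S \subset Q by apply/subsetP => C; rewrite inE => /andP[].
have Sn : S != set0.
  apply/set0Pn; case Hm: (maj (a \in C0) (b \in C0) (z \in C0)).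
    by exists C0; rewrite inE C0Q Hm.
  case: (cQ _ C0Q) => _ _ HC; exists (W :\: C0); rewrite inE HC !inWD //.
  by move: Hm; rewrite /maj; case: (a \in C0); case: (b \in C0); case: (z \in C0).
have Sp : {in S &, forall C D, C :&: D != set0}.
  move=> C D; rewrite !inE => /andP[_ hC] /andP[_ hD].
  case/or3P: (maj_meet hC hD) => /andP[h1 h2]; apply/set0Pn;
    [exists a | exists b | exists z]; by rewrite inE h1 h2.
case: (hQ S SQ Sn Sp) => w Hw.
have wW : w \in W.
  case/set0Pn: Sn => C CS; have := Hw _ CS.
  by case: (cQ C (subsetP SQ _ CS)) => /subsetP H _ _ /H.
exists w => // C CQ.
case Hm: (maj (a \in C) (b \in C) (z \in C)).
  by apply: Hw; rewrite inE CQ Hm.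
case: (cQ _ CQ) => _ _ HC.
have : w \in W :\: C.
  apply: Hw; rewrite inE HC !inWD //.
  by move: Hm; rewrite /maj; case: (a \in C); case: (b \in C); case: (z \in C).
by rewrite inE => /andP[/negbTE].
Qed.


Definition sep (X : finType) (Q : {set {set X}}) (a b : X) :=
  [set C in Q | (a \in C) != (b \in C)].

Lemma compK (X : finType) (W C : {set X}) : C \subset W -> W :\: (W :\: C) = C.
Proof.
move=> /subsetP CW; apply/setP => y; rewrite !inE.
case yC: (y \in C); first by rewrite (CW _ yC).
by case: (y \in W).
Qed.

Lemma sep_maj (X : finType) (Q : {set {set X}}) a b z w :
  (forall D, D \in Q -> (w \in D) = maj (a \in D) (b \in D) (z \in D)) ->
  sep Q a w \subset sep Q a b /\ sep Q w b \subset sep Q a b.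
Proof.
move=> Hw; split; apply/subsetP => D; rewrite !inE => /andP[DQ]; rewrite DQ Hw //=;
by rewrite /maj; case: (a \in D); case: (b \in D); case: (z \in D).
Qed.

Lemma sep_min (X : finType) (W : {set X}) (Q : {set {set X}}) A a b :
  ccl W Q -> helly Q -> A \in Q -> a \in A -> b \in W :\: A ->
  (forall a' b', a' \in A -> b' \in W :\: A -> #|sep Q a b| <= #|sep Q a' b'|) ->
  forall C, C \in sep Q a b -> C = A \/ C = W :\: A.
Proof.
move=> cQ hQ AQ aA bWA Hmin C CS.
case: (cQ _ AQ) => AW An WAQ.
have aW : a \in W by apply: (subsetP AW).
have bW : b \in W by move: bWA; rewrite inE => /andP[].
have bA : b \notin A by move: bWA; rewrite inE => /andP[].
have Qn : Q != set0 by apply/set0Pn; exists A.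
have key : forall C', C' \in Q -> a \in C' -> b \notin C' -> C' != A -> False.
  move=> C' C'Q aC' bC' C'A.
  case: (cQ _ C'Q) => C'W _ _.
  have [z zW zdiff] : exists2 z, z \in W & (z \in C') != (z \in A).
    move: C'A; rewrite eqEsubset negb_and => /orP[] /subsetPn [z h1 h2].
      by exists z; [apply: (subsetP C'W) | rewrite h1 (negbTE h2)].
    by exists z; [apply: (subsetP AW) | rewrite h1 (negbTE h2)].
  case: (median cQ hQ Qn aW bW zW) => w wW Hw.
  case: (sep_maj Hw) => s1 s2.
  have CS' : C' \in sep Q a b by rewrite inE C'Q aC' (negbTE bC').
  have [[zC zA]|[zC zA]] : ((z \in C') /\ (z \in A = false)) \/ ((z \in C' = false) /\ (z \in A)).
    by move: zdiff; case: (z \in C'); case: (z \in A); auto.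
    have wA : w \notin A by rewrite Hw // aA (negbTE bA) zA.
    have : sep Q a w \proper sep Q a b.
      apply/properP; split => //; exists C' => //.
      by rewrite inE C'Q aC' Hw // aC' zC (negbTE bC').
    move/proper_card; rewrite ltnNge Hmin //.
    by rewrite inE wW wA.
  have wA : w \in A by rewrite Hw // aA (negbTE bA) zA.
  have : sep Q w b \proper sep Q a b.
    apply/properP; split => //; exists C' => //.
    by rewrite inE C'Q Hw // aC' zC (negbTE bC').
  move/proper_card; rewrite ltnNge Hmin //.
case CA: (C == A); first by left; apply/eqP.
case CWA: (C == W :\: A); first by right; apply/eqP.
exfalso.
move: CS; rewrite inE => /andP[CQ].
case: (cQ _ CQ) => CW _ WCQ.
case aC: (a \in C) => /= bC.
  by apply: (key C) => //; rewrite ?CA // (negbTE bC).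
apply: (key (W :\: C)) => //.
- by rewrite inE aW aC.
- have bC' : b \in C by move: bC; case: (b \in C).
  by rewrite inE bC'.
apply/negP => /eqP h; move/negbT: CWA; rewrite -h compK // eqxx; by move/negP; apply.
Qed.


Lemma arith q w n : 2 <= q -> 2 <= w -> q <= n.+1 ->
  (q - 2 <= n -> q - 2 <= 2 * (w - 1).-1) -> q <= 2 * w.-1.
Proof. move=> h1 h2 h3 h4; have := h4 ltac:(lia); lia. Qed.

Lemma pair_bound (X : finType) n : forall (W : {set X}) (Q : {set {set X}}),
  #|Q| <= n -> ccl W Q -> helly Q -> #|Q| <= 2 * (#|W|).-1.
Proof.
elim: n => [|n IH] W Q Qn cQ hQ.
  by apply: leq_trans Qn _.
case: (set_0Vmem Q) => [-> | [A AQ]]; first by rewrite cards0.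
case: (cQ _ AQ) => AW An WAQ.
case: (cQ _ WAQ) => _ WAn _.
case/set0Pn: (An) => a0 a0A.
case/set0Pn: (WAn) => b0 b0WA.
pose P := [pred p : X * X | (p.1 \in A) && (p.2 \in W :\: A)].
case: (@arg_minnP _ (a0, b0) P (fun p => #|sep Q p.1 p.2|)); first by rewrite /= a0A b0WA.
move=> [a b] /andP[aA bWA] Hmin; rewrite /= in aA bWA.
have sm := sep_min cQ hQ AQ aA bWA (fun a' b' h1 h2 => Hmin (a', b') (introT andP (conj h1 h2))).
have aW : a \in W by apply: (subsetP AW).
have bW : b \in W by move: bWA; rewrite inE => /andP[].
have bA : b \notin A by move: bWA; rewrite inE => /andP[].
have ab : a != b by apply/eqP => eab; move: bA; rewrite -eab aA.
have AWA : A != W :\: A.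
  by apply/eqP => h; have := aA; rewrite {1}h inE aA.
pose R := Q :\: [set A; W :\: A].
have RQ : R \subset Q by apply: subsetDl.
have Rsep : forall C, C \in R -> (a \in C) = (b \in C).
  move=> C; rewrite inE => /andP[CnA CQ].
  apply/eqP; rewrite -[_ == _]negbK; apply/negP => hs.
  have : C \in sep Q a b by rewrite inE CQ hs.
  move/sm => [] eC; move: CnA; by rewrite eC !inE eqxx ?orbT.
pose Q' := [set C :\ b | C in R].
pose W' := W :\ b.
have inj : {in R &, injective (fun C => C :\ b)}.
  move=> C D CR DR /= h; apply/setP => y.
  case yb: (y == b).
    move/eqP: yb => ->; rewrite -(Rsep _ CR) -(Rsep _ DR).
    have : a \in C :\ b = (a \in D :\ b) by rewrite h.
    by rewrite !inE ab.
  have : y \in C :\ b = (y \in D :\ b) by rewrite h.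
  by rewrite !inE yb.
have cardR : #|R| = #|Q| - 2.
  rewrite cardsD; congr (_ - _).
  have -> : Q :&: [set A; W :\: A] = [set A; W :\: A].
    by apply/setIidPr; apply/subsetP => C; rewrite !inE => /orP[] /eqP ->.
  by rewrite cards2 AWA.
have cardQ' : #|Q'| = #|R| by apply: card_in_imset.
have Q2 : 2 <= #|Q|.
  have := cards2 A (W :\: A); rewrite AWA => <-; apply: subset_leq_card.
  by apply/subsetP => C; rewrite !inE => /orP[] /eqP ->.
have W2 : 2 <= #|W|.
  have := cards2 a b; rewrite ab => <-; apply: subset_leq_card.
  by apply/subsetP => y; rewrite !inE => /orP[] /eqP ->.
have cardW' : #|W'| = #|W| - 1 by rewrite /W' (cardsD1 b W) bW add1n subSS subn0.
have WCR : forall C, C \in R -> W :\: C \in R.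
  move=> C; rewrite !inE => /andP[CnA CQ].
  case: (cQ _ CQ) => CW _ ->; rewrite andbT.
  apply: contra CnA => /orP[] /eqP h.
    by rewrite -h compK // eqxx orbT.
  by rewrite -(compK CW) h compK // eqxx.
have cQ' : ccl W' Q'.
  move=> C' /imsetP [C CR ->].
  have CQ := subsetP RQ _ CR.
  case: (cQ _ CQ) => CW Cn _.
  split.
  - by apply: setSD.
  - case/set0Pn: (Cn) => c cC; apply/set0Pn.
    case cb: (c == b).
      exists a; rewrite !inE ab Rsep //.
      by move/eqP: cb => <-.
    by exists c; rewrite !inE cb.
  - have -> : W' :\: (C :\ b) = (W :\: C) :\ b.
      apply/setP => y; rewrite !inE.
      by case: (y == b); case: (y \in C); case: (y \in W).
    by apply/imsetP; exists (W :\: C) => //; apply: WCR.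
have hQ' : helly Q'.
  move=> S' S'Q' S'n S'p.
  pose S := [set C in R | C :\ b \in S'].
  have SQ : S \subset Q.
    by apply/subsetP => C; rewrite inE => /andP[CR _]; apply: (subsetP RQ).
  have Sn : S != set0.
    case/set0Pn: (S'n) => C' C'S.
    have := subsetP S'Q' _ C'S; case/imsetP => C CR eC.
    by apply/set0Pn; exists C; rewrite inE CR -eC C'S.
  have Sp : {in S &, forall C D, C :&: D != set0}.
    move=> C D; rewrite !inE => /andP[_ CS] /andP[_ DS].
    case/set0Pn: (S'p _ _ CS DS) => y.
    by rewrite !inE => /and3P[/andP[_ yC] _ yD]; apply/set0Pn; exists y; rewrite inE yC yD.
  have [y Hy] := hQ S SQ Sn Sp.
  exists (if y == b then a else y) => C' C'S.
  have := subsetP S'Q' _ C'S; case/imsetP => C CR eC.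
  have CS : C \in S by rewrite inE CR -eC C'S.
  have yC := Hy _ CS.
  rewrite eC; case yb: (y == b).
    by rewrite !inE ab Rsep //; move/eqP: yb => <-.
  by rewrite !inE yb yC.
have := IH W' Q' _ cQ' hQ'.
rewrite cardQ' cardR cardW'.
exact: (arith Q2 W2 Qn).
Qed.


Definition famok (X : finType) (W : {set X}) (F : {set {set X}}) :=
  forall A, A \in F -> A \subset W /\ A != set0.

Lemma fam_count (X : finType) (W : {set X}) (F : {set {set X}}) :
  famok W F -> helly F ->
  let Fc := [set W :\: A | A in F] in
  [/\ #|F :|: Fc| + #|F :&: Fc| = 2 * #|F|, F :|: Fc \subset powerset W,
      #|F :&: Fc| <= 2 * (#|W|).-1 & ccl W (F :&: Fc)].
Proof.
move=> fok hF Fc.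
have cFc : #|Fc| = #|F|.
  apply: card_in_imset => A B AF BF /= h.
  by rewrite -(compK (proj1 (fok _ AF))) h compK //; case: (fok _ BF).
have cQ : ccl W (F :&: Fc).
  move=> A; rewrite inE => /andP[AF /imsetP [B BF eA]].
  case: (fok _ AF) => AW An; split => //.
  rewrite inE; apply/andP; split.
    by rewrite eA compK //; case: (fok _ BF).
  by apply/imsetP; exists A.
split => //.
- by rewrite cardsUI cFc addnn mul2n.
- apply/subsetP => A; rewrite !inE => /orP[AF|/imsetP[B _ ->]].
    by case: (fok _ AF).
  by apply: subsetDl.
- apply: (pair_bound (leqnn _) cQ).
  by apply: helly_sub hF; apply: subsetIl.
Qed.

Lemma arith2 f u q w p : u + q = 2 * f -> u <= 2 ^ w -> q <= 2 * w.-1 ->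
  (0 < w -> 2 ^ w = 2 * p) -> (w = 0 -> 2 ^ w = 1) -> f <= p + w.-1.
Proof.
move=> h1 h2 h3 h4 h5; case: w h2 h3 h4 h5 => [|w] h2 h3 h4 h5.
  rewrite h5 // in h2; lia.
rewrite h4 // in h2; lia.
Qed.

Lemma family_bound (X : finType) (W : {set X}) (F : {set {set X}}) :
  famok W F -> helly F -> #|F| <= 2 ^ (#|W|.-1) + #|W|.-1.
Proof.
move=> fok hF; case: (fam_count fok hF) => h1 h2 h3 _.
apply: (arith2 h1 _ h3).
- by rewrite -card_powerset; apply: subset_leq_card.
- by case: #|W| => // w _; rewrite expnS.
- by move=> ->.
Qed.


Lemma helly3 (X : finType) (F : {set {set X}}) P1 P2 P3 :
  helly F -> P1 \in F -> P2 \in F -> P3 \in F ->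
  P1 :&: P2 != set0 -> P1 :&: P3 != set0 -> P2 :&: P3 != set0 ->
  exists y, [/\ y \in P1, y \in P2 & y \in P3].
Proof.
move=> hF h1 h2 h3 n12 n13 n23.
have n1 : P1 != set0 by apply: contraNneq n12 => ->; rewrite set0I.
have n2 : P2 != set0 by apply: contraNneq n23 => ->; rewrite set0I.
have n3 : P3 != set0 by apply: contraNneq n13 => ->; rewrite setI0.
have [y Hy] : exists y, forall C, C \in [set P1; P2; P3] -> y \in C.
  apply: hF.
- by apply/subsetP => C; rewrite !inE => /orP[/orP[]|] /eqP->.
- by apply/set0Pn; exists P1; rewrite !inE eqxx.
- move=> C D; rewrite !inE => /orP[/orP[]|] /eqP-> /orP[/orP[]|] /eqP->;
  by rewrite ?setIid //; rewrite setIC.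
by exists y; split; apply: Hy; rewrite !inE eqxx ?orbT.
Qed.

Lemma arith3 f u q w p : u + q = 2 * f -> u <= 2 ^ w -> q <= 2 * w.-1 ->
  2 ^ w = 2 * p -> f = p + w.-1 -> u = 2 ^ w /\ q = 2 * w.-1.
Proof. move=> h1 h2 h3 h4 h5; rewrite h4 in h2 *; lia. Qed.

Lemma card1E (X : finType) (A : {set X}) : #|A| = 1 -> exists y, A = [set y].
Proof. by move/eqP/cards1P. Qed.

Lemma two_in (X : finType) (A : {set X}) a : a \in A -> #|A| != 1 -> exists a2, a2 \in A /\ a2 != a.
Proof.
move=> aA h; have : 0 < #|A :\ a|.
  by move: h; rewrite (cardsD1 a A) aA; case: #|A :\ a|.
case/card_gt0P => a2; rewrite !inE => /andP[h1 h2]; by exists a2.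
Qed.

Lemma family_eq (X : finType) (W : {set X}) (F : {set {set X}}) :
  famok W F -> helly F -> 0 < #|W| -> #|F| = 2 ^ (#|W|.-1) + #|W|.-1 ->
  exists2 x, x \in W & (forall y, y \in W :\ x -> [set y] \in F) /\
                      (forall B : {set X}, B \subset W -> x \in B -> B \in F).
Proof.
move=> fok hF W0 Feq.
case: (fam_count fok hF) => h1 h2 h3 cQ.
set Fc := [set W :\: A | A in F] in h1 h2 h3 cQ.
set Q := F :&: Fc in h1 h3 cQ.
have e2 : 2 ^ #|W| = 2 * 2 ^ (#|W|.-1).
  by move: W0; case: #|W| => // w _; rewrite expnS.
have [hu hq] := arith3 h1 (leq_trans (subset_leq_card h2) (eq_leq (card_powerset W))) h3 e2 Feq.
have cover : forall B : {set X}, B \subset W -> B \in F \/ W :\: B \in F.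
  move=> B BW.
  have : F :|: Fc = powerset W.
    by apply/eqP; rewrite eqEcard h2 card_powerset hu leqnn.
  move/setP/(_ B); rewrite !inE BW => /orP[BF|/imsetP[A AF eB]]; first by left.
  by right; rewrite eB compK //; case: (fok _ AF).
have QF : forall A : {set X}, A \in Q -> A \in F by move=> A; rewrite inE => /andP[].
have sing : forall A : {set X}, A \in Q -> #|A| = 1 \/ #|W :\: A| = 1.
  move=> A AQ; case: (cQ _ AQ) => AW An WAQ.
  case: (cQ _ WAQ) => _ WAn _.
  case E1: (#|A| == 1); first by left; apply/eqP.
  case E2: (#|W :\: A| == 1); first by right; apply/eqP.
  exfalso.
  case/set0Pn: (An) => a1 a1A.
  case/set0Pn: (WAn) => b1 b1WA.
  have [a2 [a2A a2a1]] := two_in a1A (negbT E1).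
  have [b2 [b2WA b2b1]] := two_in b1WA (negbT E2).
  have AWd : forall y, y \in A -> y \in W :\: A -> False.
    by move=> y yA; rewrite inE yA.
  have a1W : a1 \in W by apply: (subsetP AW).
  have a2W : a2 \in W by apply: (subsetP AW).
  have b1W : b1 \in W by move: b1WA; rewrite inE => /andP[].
  have b2W : b2 \in W by move: b2WA; rewrite inE => /andP[].
  pose P4 (Y : {set X}) := [/\ Y \subset W, Y :&: A != set0, Y :&: (W :\: A) != set0,
     (W :\: Y) :&: A != set0 & (W :\: Y) :&: (W :\: A) != set0].
  have [Y YF [YW yA yB nyA nyB]] : exists2 Y, Y \in F & P4 Y.
    pose X0 := [set a1; b1].
    have X0W : X0 \subset W by apply/subsetP => y; rewrite !inE => /orP[]/eqP->.
    have a2X : a2 \notin X0.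
      rewrite !inE negb_or a2a1 /=; apply/negP => /eqP e; subst a2.
      exact: (AWd _ a2A b1WA).
    have b2X : b2 \notin X0.
      rewrite !inE negb_or b2b1 andbT; apply/negP => /eqP e; subst b2.
      exact: (AWd _ a1A b2WA).
    have P4X : P4 X0.
      split => //; apply/set0Pn.
      - by exists a1; rewrite !inE eqxx a1A.
      - by exists b1; rewrite inE b1WA !inE eqxx orbT.
      - by exists a2; rewrite inE a2A inE a2X a2W.
      - by exists b2; rewrite inE b2WA inE b2X b2W.
    case: (cover _ X0W) => XF; first by exists X0.
    exists (W :\: X0) => //.
    case: P4X => _ h1' h2' h3' h4'; split; rewrite ?compK //; exact: subsetDl.
  pose Z := (Y :&: A) :|: ((W :\: Y) :&: (W :\: A)).
  have ZW : Z \subset W.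
    apply/subsetP => y; rewrite !inE => /orP[/andP[yY _]|/andP[/andP[_ ->] _]] //.
    exact: (subsetP YW).
  case: (cover _ ZW) => ZF.
  - have [y [y1 y2 y3]] : exists y, [/\ y \in W :\: A, y \in Y & y \in Z].
      apply: (helly3 hF (QF _ WAQ) YF ZF).
    + by rewrite setIC.
    + case/set0Pn: nyB => y h; apply/set0Pn; exists y; move: h; rewrite /Z !inE;
      by case: (y \in Y); case: (y \in A); case: (y \in W).
    + case/set0Pn: yA => y h; apply/set0Pn; exists y; move: h; rewrite /Z !inE;
      by case: (y \in Y); case: (y \in A); case: (y \in W).
    + by move: y1 y2 y3; rewrite /Z !inE; case: (y \in Y); case: (y \in A); case: (y \in W).
  - have [y [y1 y2 y3]] : exists y, [/\ y \in A, y \in Y & y \in W :\: Z].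
      apply: (helly3 hF (QF _ AQ) YF ZF).
    + by rewrite setIC.
    + case/set0Pn: nyA => y h; apply/set0Pn; exists y; move: h; rewrite /Z !inE;
      by case: (y \in Y); case: (y \in A); case: (y \in W).
    + case/set0Pn: yB => y h; apply/set0Pn; exists y; move: h; rewrite /Z !inE;
      by case: (y \in Y); case: (y \in A); case: (y \in W).
    + by move: y1 y2 y3; rewrite /Z !inE; case: (y \in Y); case: (y \in A); case: (y \in W).
pose I := [set y in W | [set y] \in Q].
have QI : Q \subset [set [set y] | y in I] :|: [set W :\ y | y in I].
  apply/subsetP => A AQ; case: (cQ _ AQ) => AW _ WAQ.
  case: (sing _ AQ) => /card1E [y ey].
  - have yA : y \in A by rewrite ey set11.
    rewrite inE; apply/orP; left; apply/imsetP; exists y => //.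
    by rewrite /I inE -ey AQ (subsetP AW _ yA).
  - have yW : y \in W :\: A by rewrite ey set11.
    rewrite inE; apply/orP; right; apply/imsetP; exists y.
      by rewrite /I inE -ey WAQ andbT; move: yW; rewrite inE => /andP[].
    by rewrite -ey compK.
have IW : I \subset W by apply/subsetP => y; rewrite inE => /andP[].
have cI : #|Q| <= 2 * #|I|.
  apply: leq_trans (subset_leq_card QI) _; rewrite mul2n -addnn.
  apply: leq_trans (leq_card_setU _ _) _.
  by apply: leq_add; apply: leq_imset_card.
have cWI : #|W :\: I| <= 1.
  rewrite cardsD (setIidPr IW).
  move: hq cI W0; clear; lia.
have Iy : forall y, y \in I -> [set y] \in F /\ W :\ y \in F.
  move=> y; rewrite inE => /andP[yW yQ]; split; first exact: QF.
  by case: (cQ _ yQ) => _ _ /QF.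
have [x xW xI] : exists2 x, x \in W & forall y, y \in W :\ x -> y \in I.
  case: (set_0Vmem (W :\: I)) => [e | [x xWI]].
    case/card_gt0P: W0 => x xW; exists x => // y; rewrite inE => /andP[_ yW].
    apply/negPn/negP => yI.
    have : y \in W :\: I by rewrite in_setD yI yW.
    by rewrite e inE.
  exists x; first by move: xWI; rewrite inE => /andP[].
  move=> y yWx; have yx : y != x by move: yWx; rewrite !inE => /andP[].
  have yW : y \in W by move: yWx; rewrite !inE => /andP[].
  apply/negPn/negP => yI.
  have : #|[set x; y]| <= #|W :\: I|.
    apply: subset_leq_card; apply/subsetP => z; rewrite in_set2 => /orP[]/eqP->//.
    by rewrite in_setD yI yW.
  by rewrite cards2 eq_sym yx => /leq_trans /(_ cWI).
exists x => //; split.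
  by move=> y /xI /Iy [].
move=> B BW xB.
case: (cover _ BW) => // DF.
set D := W :\: B in DF.
have xD : x \notin D by rewrite /D in_setD xB.
have DI : forall y, y \in D -> y \in I.
  move=> y yD; apply: xI; rewrite inE; move: yD; rewrite /D in_setD => /andP[yB yW].
  rewrite yW andbT in_set1; apply: contraNneq yB => ->; exact: xB.
case: (set_0Vmem D) => [D0 | [d dD]].
  have W0F : W \in F.
    case: (cover set0 (sub0set W)) => h; first by case: (fok _ h) => _; rewrite eqxx.
    by rewrite setD0 in h.
  by rewrite -(compK BW) -/D D0 setD0.
case E1: (#|D| == 1).
  move/eqP/card1E: E1 => [y eD].
  have yD : y \in D by rewrite eD set11.
  have [_ h] := Iy y (DI y yD).
  by move: h; rewrite -eD /D compK.
have [z [z1 z2]] : exists z, z \in D /\ forall C, C \in D |: [set W :\ y | y in D] -> z \in C.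
  have [z Hz] : exists z, forall C, C \in D |: [set W :\ y | y in D] -> z \in C.
    apply: hF.
    - apply/subsetP => C; rewrite in_setU1 => /orP[/eqP-> //|/imsetP[y yD ->]].
      by case: (Iy _ (DI _ yD)).
    - by apply/set0Pn; exists D; rewrite in_setU1 eqxx.
    - have Dn : forall y, y \in D -> D :&: (W :\ y) != set0.
        move=> y yD; have [y2 [y2D y2y]] := two_in yD (negbT E1).
        apply/set0Pn; exists y2; rewrite !inE y2y /=; move: y2D; rewrite inE => /andP[-> ->].
        by [].
      move=> C C'; rewrite !in_setU1 => /orP[/eqP->|/imsetP[y yD ->]] /orP[/eqP->|/imsetP[y' yD' ->]].
      + by rewrite setIid; apply/set0Pn; exists d.
      + exact: Dn.
      + by rewrite setIC; exact: Dn.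
      + apply/set0Pn; exists x; rewrite !inE xW !andbT.
        by apply/andP; split; apply: contraNneq xD => ->.
  by exists z; split => //; apply: Hz; rewrite in_setU1 eqxx.
have := z2 (W :\ z); rewrite in_setU1; have -> : W :\ z \in [set W :\ y | y in D].
  by apply/imsetP; exists z.
by rewrite orbT => /(_ isT); rewrite !inE eqxx.
Qed.



Lemma card_sets (n : nat) : #|{set 'I_n}| = 2 ^ n.
Proof.
have -> : 2 ^ n = #|powerset [set: 'I_n]| by rewrite card_powerset cardsT card_ord.
by apply: eq_card => S; rewrite !inE subsetT.
Qed.

Lemma set1I0 (Y : finType) (a b : Y) : ([set a] :&: [set b] == set0) = (a != b).
Proof.
case: (eqVneq a b) => [->|ne]; first by rewrite setIid; apply/negbTE/set0Pn; exists b; rewrite inE.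
apply/eqP/setP => y; rewrite !inE; apply/negbTE; apply: contra ne => /andP[/eqP-> /eqP ->] //.
Qed.

Lemma set1I0' (Y : finType) (a : Y) S : ([set a] :&: S == set0) = (a \notin S).
Proof.
case aS: (a \in S) => /=.
  by apply/negbTE/set0Pn; exists a; rewrite inE set11 aS.
apply/eqP/setP => y; rewrite !inE; case: (eqVneq y a) => [->|] //=; by rewrite aS.
Qed.


Lemma graph_main (k : nat) (T : finType) (e : rel T) :
  2 <= k -> simple_graph e -> twin_free e -> imax e = k ->
  #|T| <= 2 ^ (k - 1) + k - 1 /\
  (#|T| = 2 ^ (k - 1) + k - 1 -> graph_iso e (@ext_rel (k - 1))).
Proof.
move=> k2 [esy eirr] tf ik.
have [M Mdef] : {M : {set {set T}} | M = [set A : {set T} | maxset (independent e) A]} by exists [set A : {set T} | maxset (independent e) A].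
have inM : forall A, (A \in M) = maxset (independent e) A by move=> A; rewrite Mdef inE.
have cM : #|M| = k by rewrite -ik Mdef.
have ext : forall A, independent e A -> exists2 B, B \in M & A \subset B.
  move=> A iA; case: (maxset_exists iA) => B mB AB; exists B => //; by rewrite inM.
have Mind : forall B, B \in M -> independent e B.
  by move=> B; rewrite inM => /maxsetP [].
pose sg (v : T) := [set A in M | v \in A].
have adj : forall a b, e a b = (sg a :&: sg b == set0).
  move=> a b; case eab: (e a b).
    apply/esym/eqP/setP => B; rewrite !inE; apply/negbTE/negP => /and3P[/andP[BM aB] _ bB].
    move: (Mind _ BM) => /forallP /(_ a); rewrite aB /= => /forallP /(_ b).
    by rewrite bB eab.
  have iab : independent e [set a; b].
    apply/forallP => x; apply/implyP; rewrite !inE => hx.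
    apply/forallP => y; apply/implyP; rewrite !inE => hy.
    case/orP: hx => /eqP->; case/orP: hy => /eqP->; by rewrite ?eirr ?eab // esy eab.
  case: (ext _ iab) => B BM sB; apply/esym/negbTE/set0Pn; exists B.
  by rewrite !inE BM (subsetP sB a) ?(subsetP sB b) // !inE eqxx ?orbT.
have sg_inj : injective sg.
  move=> a b h; apply: tf; apply/setP => y; rewrite !inE !adj; by rewrite h.
have sgn : forall v, sg v != set0.
  move=> v; have iv : independent e [set v].
    by apply/forallP => x; apply/implyP; rewrite inE => /eqP->; apply/forallP => y;
       apply/implyP; rewrite inE => /eqP->; rewrite eirr.
  case: (ext _ iv) => B BM sB; apply/set0Pn; exists B; rewrite !inE BM.
  by apply: (subsetP sB); rewrite inE.
pose F := [set sg v | v in T].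
have fok : famok M F.
  move=> A /imsetP [v _ ->]; split; last exact: sgn.
  by apply/subsetP => B; rewrite inE => /andP[].
have hF : helly F.
  move=> S SF Sn Sp.
  pose Bs := [set v | sg v \in S].
  have iB : independent e Bs.
    apply/forallP => u; apply/implyP; rewrite inE => uS.
    apply/forallP => v; apply/implyP; rewrite inE => vS.
    by rewrite adj; apply: Sp.
  case: (ext _ iB) => A AM sA; exists A => C CS.
  case/imsetP: (subsetP SF _ CS) => v _ eC.
  by rewrite eC inE AM (subsetP sA) // inE -eC.
have cT : #|T| = #|F| by rewrite card_imset.
split.
  have := family_bound fok hF; rewrite -cT cM.
  move: k2; clear; set p := 2 ^ _; set q := 2 ^ _; have -> : q = p by rewrite /p /q subn1.
  lia.
move=> Teq.
have k1 : 0 < #|M| by rewrite cM ltnW.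
have Feq : #|F| = 2 ^ (#|M|.-1) + #|M|.-1.
  rewrite -cT Teq cM subn1; move: k2; clear; set p := 2 ^ _; lia.
case: (family_eq fok hF k1 Feq) => x xM [singl star].
have [v0 _] : exists v0 : T, true.
  have : 0 < #|T| by rewrite Teq; move: k2; clear; set p := 2 ^ _; lia.
  by case/card_gt0P => v0 _; exists v0.
pose vtx S := odflt v0 [pick v | sg v == S].
have vtxE : forall S, S \in F -> sg (vtx S) = S.
  move=> S /imsetP [v _ ->]; rewrite /vtx; case: pickP => [w /eqP // | /(_ v)].
  by rewrite eqxx.
have EM : #|M :\ x| = k - 1.
  move: cM; rewrite (cardsD1 x M) xM; move: k2; clear; lia.
pose h (j : 'I_(k - 1)) : {set T} := enum_val (cast_ord (esym EM) j).
have hM : forall j, h j \in M :\ x by move=> j; apply: enum_valP.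
have hinj : injective h by move=> i j /enum_val_inj /cast_ord_inj.
have hx : forall j, h j != x by move=> j; move: (hM j); rewrite in_setD1 => /andP[].
pose SX (X : {set 'I_(k - 1)}) := x |: ((M :\ x) :\: [set h j | j in X]).
pose S (u : ext_vertex (k - 1)) := match u with inl j => [set h j] | inr X => SX X end.
have SF : forall u, S u \in F.
  case => [j|X] /=; first by apply: singl; apply: hM.
  apply: star; last by rewrite /SX setU11.
  apply/subsetP => y; rewrite /SX in_setU1 => /orP[/eqP-> //|].
  by rewrite in_setD => /andP[_]; rewrite in_setD1 => /andP[].
pose g u := vtx (S u).
have sgg : forall u, sg (g u) = S u by move=> u; apply: vtxE.
have SXx : forall X, SX X :\ x = (M :\ x) :\: [set h j | j in X].
  move=> X; apply: setU1K; by rewrite in_setD in_setD1 eqxx andbF.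
have Sinj : injective S.
  case=> [i|X] [j|Y] /= hh.
  - by congr inl; apply: hinj; apply: set1_inj.
  - have : x \in SX Y by rewrite /SX setU11.
    by rewrite -hh in_set1 eq_sym (negbTE (hx i)).
  - have : x \in SX X by rewrite /SX setU11.
    by rewrite hh in_set1 eq_sym (negbTE (hx j)).
  - congr inr; apply: (imset_inj hinj).
    have : SX X :\ x = SX Y :\ x by rewrite hh.
    rewrite !SXx => h2.
    have sub : forall Z : {set 'I_(k - 1)}, [set h j | j in Z] \subset M :\ x.
      by move=> Z; apply/subsetP => y /imsetP [j _ ->]; apply: hM.
    by rewrite -(compK (sub X)) h2 compK.
have ginj : injective g by move=> u v /(congr1 sg); rewrite !sgg => /Sinj.
have gbij : bijective g.
  apply: (@inj_card_bij (ext_vertex (k - 1)) T g ginj); rewrite card_sum card_ord card_sets Teq.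
  move: k2; clear; set p := 2 ^ _; lia.
have gadj : forall u v, e (g u) (g v) = ext_rel u v.
  move=> u v; rewrite adj !sgg; case: u => [i|X]; case: v => [j|Y] /=.
  - by rewrite set1I0 (inj_eq hinj).
  - by rewrite set1I0' /SX in_setU1 (negbTE (hx i)) /= in_setD (hM i) andbT mem_imset // negbK.
  - by rewrite setIC set1I0' /SX in_setU1 (negbTE (hx j)) /= in_setD (hM j) andbT mem_imset // negbK.
  - by apply/negbTE/set0Pn; exists x; rewrite in_setI /SX !setU11.
case: gbij => g' gK g'K.
exists g'; split; first by exists g.
by move=> a b; rewrite -gadj !g'K.
Qed.

Theorem corollary2p10 (k : nat) (T : finType) (e : rel T) :
  2 <= k -> simple_graph e -> twin_free e -> imax e = k ->
  #|T| <= 2 ^ (k - 1) + k - 1 /\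
  (#|T| = 2 ^ (k - 1) + k - 1 -> graph_iso e (@ext_rel (k - 1))).
Proof. exact: graph_main. Qed.
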